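(* Let $a(x,\xi)$, $x,\xi\in\mathbb{R}^d$, be a smooth symbol of order zero and type $(1,0)$ which is compactly supported in $x$. Then for every $M>0$ there exists $C_M>0$ such that for all $\epsilon>0$, the $\epsilon$-separation rank $r_\epsilon$ of $a(x,\xi)$ with respect to the variables $x$ and $\xi$ obeys $r_\epsilon\le C_M\,\epsilon^{-1/M}$.
   Context: A smooth function $a(x,\xi)$ is a symbol of order zero and type $(1,0)$ if for every pair of multi-indices $(\alpha,\beta)$ there is a constant $C_{\alpha\beta}>0$ with $|\partial_\xi^\alpha\partial_x^\beta a(x,\xi)|\le C_{\alpha\beta}(1+|\xi|^2)^{-|\alpha|/2}$ for all $x,\xi$. For a function $f(x,\xi)$ and $\epsilon>0$, the $\epsilon$-separation rank is the smallest integer $r_\epsilon$ for which there exist functions $c_n(x)$, $d_n(\xi)$ ($0\le n\le r_\epsilon-1$) with $|f(x,\xi)-\sum_{n=0}^{r_\epsilon-1}c_n(x)d_n(\xi)|\le\epsilon$ for all $x,\xi$. *)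

(* Defs.v *)
From HB Require Import structures.
From mathcomp Require Import all_boot all_order all_algebra.
From mathcomp Require Import all_classical all_reals all_analysis.
Set Implicit Arguments. Unset Strict Implicit. Unset Printing Implicit Defensive.
Import Order.TTheory GRing.Theory Num.Theory.
Import numFieldNormedType.Exports.
Local Open Scope ring_scope.

Section Defs.
Variables (R : realType) (d : nat).

Definition phase := ('rV[R]_d * 'rV[R]_d)%type.

Definition enorm (v : 'rV[R]_d) : R := Num.sqrt (\sum_(j < d) v 0 j ^+ 2).

Definition xdir (i : 'I_d) : phase := (delta_mx 0 i, 0).
Definition xidir (i : 'I_d) : phase := (0, delta_mx 0 i).

Fixpoint iterD (s : seq phase) (f : phase -> R) : phase -> R :=
  match s with
  | [::] => f
  | v :: s' => fun p => 'D_v (iterD s' f) p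
  end.

Definition smooth (f : phase -> R) : Prop :=
  forall (s : seq phase) (p : phase), differentiable (iterD s f) p.

(* symbol of order 0 and type (1,0): for multi-indices alpha (in xi), beta (in x),
   represented as sequences of coordinate indices (|alpha| = size alpha),
   |d_xi^alpha d_x^beta a(x,xi)| <= C (1+|xi|^2)^(-|alpha|/2). *)
Definition symbol0_10 (a : phase -> R) : Prop :=
  smooth a /\
  forall (alpha beta : seq 'I_d), exists2 C : R, 0 < C &
    forall (x xi : 'rV[R]_d),
      `| iterD (map xidir alpha ++ map xdir beta) a (x, xi) |
        <= C * (1 + enorm xi ^+ 2) `^ (- ((size alpha)%:R / 2)).

Definition compact_support_x (a : phase -> R) : Prop :=
  exists K : set 'rV[R]_d, compact K /\
    forall x xi, ~ K x -> a (x, xi) = 0.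

Definition sep_approx (f : phase -> R) (eps : R) (r : nat) : Prop :=
  exists (c : nat -> 'rV[R]_d -> R) (e : nat -> 'rV[R]_d -> R),
    forall x xi, `| f (x, xi) - \sum_(n < r) c n x * e n xi | <= eps.

Definition is_sep_rank (f : phase -> R) (eps : R) (r : nat) : Prop :=
  sep_approx f eps r /\ forall r', sep_approx f eps r' -> (r <= r')%N.

End Defs.

(* Main.v *)
Require Import Defs.
From HB Require Import structures.
From mathcomp Require Import all_boot all_order all_algebra.
From mathcomp Require Import all_classical all_reals all_analysis.
From mathcomp Require Import ring lra.
Set Implicit Arguments. Unset Strict Implicit. Unset Printing Implicit Defensive.
Import Order.TTheory GRing.Theory Num.Theory.
Import numFieldNormedType.Exports.
Local Open Scope ring_scope.

Section Expand.
Variables (R : realType) (d : nat).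
Implicit Types (a : phase R d -> R).

Lemma is_derive_monom (c : R) k (t : R) :
  is_derive t (1:R) (fun s : R => c * s ^+ k) (c * (k%:R * t ^+ k.-1)).
Proof.
have H := is_deriveZ c (is_deriveX k (is_derive_id t (1:R))).
have -> : (fun s : R => c * s ^+ k) = c \*: (id ^+ k).
  by apply: funext => s; rewrite /GRing.scale /= !fctE.


apply: is_derive_eq H _.
by rewrite /GRing.scale /= mulr1.
Qed.

Lemma is_derive_poly n (c : nat -> R) (t : R) :
  is_derive t (1:R) (fun s : R => \sum_(k < n) c k * s ^+ k)
    (\sum_(k < n) c k * (k%:R * t ^+ k.-1)).
Proof.
have -> : (fun s : R => \sum_(k < n) c k * s ^+ k) =
   \sum_(k < n) (fun s : R => c k * s ^+ k).
  by apply: funext => s; rewrite fct_sumE.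
apply: is_derive_sum => k; exact: is_derive_monom.
Qed.

Lemma taylor_crude n : forall (G : nat -> R -> R) (B : R),
 (forall k t, is_derive t (1:R) (G k) (G k.+1 t)) ->
 (forall t, 0 <= t <= 1 -> `|G n t| <= B) ->
 forall u, 0 <= u <= 1 ->
   `|G 0%N u - \sum_(k < n) G k 0 / k`!%:R * u ^+ k| <= B.
Proof.
elim: n => [|n IH] G B dG bG u u01.
  by rewrite big_ord0 subr0; apply: bG.
pose Rm := fun s => G 0%N s - \sum_(k < n.+1) G k 0 / k`!%:R * s ^+ k.
pose dRm := fun s => G 1%N s - \sum_(k < n) G k.+1 0 / k`!%:R * s ^+ k.
have dR : forall s, is_derive s (1:R) Rm (dRm s).
  move=> s; rewrite /Rm /dRm.
  apply: is_derive_eq (is_deriveB (dG 0%N s) (is_derive_poly n.+1 (fun k => G k 0 / k`!%:R) s)) _.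
  rewrite big_ord_recl /= mul0r mulr0 add0r; congr (_ - _).
  apply: eq_bigr => i _; rewrite /bump /= add1n.
  rewrite factS natrM invfM.
  have h1 : (i.+1)%:R != 0 :> R by rewrite pnatr_eq0.
  rewrite add0n.
  have h2 : (i`!)%:R != 0 :> R by rewrite pnatr_eq0 -lt0n fact_gt0.
  by rewrite -!mulrA; congr (_ * _); rewrite mulrCA mulKf.
have bd : forall s, 0 <= s <= 1 -> `|dRm s| <= B.
  move=> s s01; apply: (IH (fun k => G k.+1)) => //.
case/andP: u01 => u0 u1.
have R0 : Rm 0 = 0.
  rewrite /Rm big_ord_recl /= expr0 fact0 invr1 !mulr1.
  rewrite big1 ?addr0 ?subrr // => i _.
  by rewrite expr0n /= mulr0.
case: (ltrgt0P u) u0 => // [up _|-> _]; last by rewrite -/(Rm 0) R0 normr0 (le_trans _ (bG 0 _)) // ?lexx ?ler01.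
have [c cI eq] := MVT up (fun x _ => dR x) (derivable_within_continuous (fun x _ => @ex_derive _ _ _ _ _ _ _ (dR x))).
have -> : G 0%N u - \sum_(k < n.+1) G k 0 / k`!%:R * u ^+ k = Rm u by [].
rewrite -[Rm u]subr0 -R0 eq subr0 normrM (ger0_norm (ltW up)).
rewrite -[B]mulr1 ler_pM // ?normr_ge0 //.
rewrite ?(ltW up) //. apply: bd; move: cI; rewrite in_itv /= => /andP[c0 cu].
by rewrite ltW //= (le_trans (ltW cu)).
Qed.



Definition xv (s : 'rV[R]_d) : phase R d := (s, 0).

Fixpoint Wl (k : nat) : seq (seq 'I_d) :=
  match k with
  | 0%N => [:: [::]]
  | k.+1 => [seq i :: w | i <- enum 'I_d, w <- Wl k]
  end.

Lemma xv_sum (s : 'rV[R]_d) : xv s = \sum_(i <- enum 'I_d) s 0 i *: @xdir R d i.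
Proof.
rewrite /xv /xdir; apply: injective_projections => /=.
  rewrite (big_morph fst (id1 := 0) (op1 := +%R)) //=.
  rewrite big_enum /= {1}(row_sum_delta s); apply: eq_bigl => i //.
rewrite (big_morph snd (id1 := 0) (op1 := +%R)) //=.
by rewrite big1 // => i _ /=; rewrite scaler0.
Qed.

Lemma is_derive_lin (T : Type) (l : seq T) (c : T -> R) (F : T -> phase R d -> R)
  (v p : phase R d) :
  (forall w, differentiable (F w) p) ->
  is_derive p v (fun q => \sum_(w <- l) c w * F w q) (\sum_(w <- l) c w * 'D_v (F w) p).
Proof.
move=> dF; elim: l => [|w l IH].
  have -> : (fun q => \sum_(w <- [::]) c w * F w q) = cst 0.
    by apply: funext => q; rewrite big_nil.
  rewrite big_nil; exact: is_derive_cst.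
have -> : (fun q => \sum_(w0 <- w :: l) c w0 * F w0 q) =
   (c w \*: F w) + (fun q => \sum_(w0 <- l) c w0 * F w0 q).
  by apply: funext => q; rewrite big_cons.
rewrite big_cons; apply: is_deriveD => //.
apply: is_deriveZ; apply: derivableP; exact: diff_derivable.
Qed.

Lemma D_xv (F : phase R d -> R) p s : differentiable F p ->
  'D_(xv s) F p = \sum_(i <- enum 'I_d) s 0 i * 'D_(@xdir R d i) F p.
Proof.
move=> dF; rewrite deriveE // xv_sum linear_sum.
apply: eq_bigr => i _; rewrite linearZ /= deriveE //.
Qed.

Lemma expand a : smooth a -> forall k (s : 'rV[R]_d) p,
  Defs.iterD (nseq k (xv s)) a p =
  \sum_(w <- Wl k) (\prod_(i <- w) s 0 i) * Defs.iterD (map (@xdir R d) w) a p.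
Proof.
move=> sa; elim=> [|k IH] s p.
  by rewrite /= big_seq1 big_nil mul1r.
have -> : Defs.iterD (nseq k.+1 (xv s)) a p =
   'D_(xv s) (fun q => \sum_(w <- Wl k) (\prod_(i <- w) s 0 i) * Defs.iterD (map (@xdir R d) w) a q) p.
  rewrite /=; congr (derive _ _ _); apply: funext => q; exact: IH.
have := @is_derive_lin _ (Wl k) (fun w => \prod_(i <- w) s 0 i)
  (fun w => Defs.iterD (map (@xdir R d) w) a) (xv s) p (fun w => sa _ p).
move/@derive_val => ->.
rewrite /= big_allpairs_dep /=.
under eq_bigr do rewrite D_xv // big_distrr /=.
rewrite exchange_big /=; apply: eq_bigr => i _; apply: eq_bigr => w _.
by rewrite big_cons mulrCA mulrA.
Qed.


Lemma prod_bound (s : 'rV[R]_d) h w : (forall i, `|s 0 i| <= h) ->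
  `|\prod_(i <- w) s 0 i| <= h ^+ size w.
Proof.
move=> hs; elim: w => [|i w IH]; first by rewrite big_nil normr1 expr0.
rewrite big_cons normrM /= exprS ler_pM //.
Qed.

Lemma size_Wl k w : w \in Wl k -> size w = k.
Proof.
elim: k w => [|k IH] w /=; first by rewrite inE => /eqP ->.
by case/allpairsPdep => i [w' [_ /IH <- ->]].
Qed.

Lemma sum_bound (T : eqType) (l : seq T) (f : T -> R) K :
  (forall x, x \in l -> `|f x| <= K) -> `|\sum_(x <- l) f x| <= (size l)%:R * K.
Proof.
elim: l => [|x l IH] H; first by rewrite big_nil normr0 mul0r.
rewrite big_cons /= -addn1 natrD mulrDl mul1r addrC.
apply: le_trans (ler_normD _ _) _; apply: lerD.
  by apply: IH => y yl; apply: H; rewrite inE yl orbT.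
by apply: H; rewrite inE eqxx.
Qed.

Lemma iter_bound a k (s : 'rV[R]_d) p h B : smooth a ->
  (forall w, w \in Wl k -> `|Defs.iterD (map (@xdir R d) w) a p| <= B) ->
  (forall i, `|s 0 i| <= h) ->
  `|Defs.iterD (nseq k (xv s)) a p| <= (size (Wl k))%:R * (h ^+ k * B).
Proof.
move=> sa hB hs; rewrite expand //; apply: sum_bound => w wk.
rewrite normrM; apply: ler_pM => //; last by apply: hB.
by rewrite -(size_Wl wk); apply: prod_bound.
Qed.

Lemma path_derive (F : phase R d -> R) (p v : phase R d) (t : R) :
  differentiable F (p + t *: v) ->
  is_derive t (1:R) (fun u => F (p + u *: v)) ('D_v F (p + t *: v)).
Proof.
move=> dF.
set q := p + t *: v.
have E : (fun h : R => h^-1 *: (((fun u => F (p + u *: v)) \o shift t) (h *: 1) - F (p + t *: v)))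
  = (fun h : R => h^-1 *: ((F \o shift q) (h *: v) - F q)).
  apply: funext => h /=; congr (_ *: (F _ - _)).
  by rewrite /q /shift /= [h%:A]mulr1 scalerDl addrCA.
apply: DeriveDef.
  by rewrite /derivable E; apply: diff_derivable.
by rewrite /derive E.
Qed.


Lemma taylor_point a n (x0 x xi : 'rV[R]_d) h B : smooth a ->
  (forall i, `|(x - x0) 0 i| <= h) ->
  (forall w, w \in Wl n -> forall p, `|Defs.iterD (map (@xdir R d) w) a p| <= B) ->
  `|a (x, xi) - \sum_(k < n) \sum_(w <- Wl k)
      ((\prod_(i <- w) (x - x0) 0 i) / k`!%:R) * Defs.iterD (map (@xdir R d) w) a (x0, xi)|
   <= (size (Wl n))%:R * (h ^+ n * B).
Proof.
move=> sa hs hB.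
set s := x - x0.
pose G := fun k (t : R) => Defs.iterD (nseq k (xv s)) a ((x0, xi) + t *: xv s).
have dG : forall k t, is_derive t (1:R) (G k) (G k.+1 t).
  move=> k t; rewrite /G; apply: path_derive; exact: sa.
have bG : forall t, 0 <= t <= 1 -> `|G n t| <= (size (Wl n))%:R * (h ^+ n * B).
  move=> t _; apply: iter_bound => // w wn; exact: hB.
have := taylor_crude dG bG (u := 1); rewrite ler01 lexx => /(_ isT).
have -> : G 0%N 1 = a (x, xi).
  rewrite /G /= scale1r /xv; congr a.
  by apply: injective_projections => /=; rewrite /s ?addr0 // addrC subrK.
congr (`|_ - _| <= _); apply: eq_bigr => k _.
rewrite expr1n mulr1 /G scale0r addr0 expand // big_distrl /=.
by apply: eq_bigr => w _; rewrite mulrAC.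
Qed.


Section Cells.
Variables (L h : R) (Kc : nat).
Definition corner (j : {ffun 'I_d -> 'I_Kc}) : 'rV[R]_d :=
  \row_i (- L + (j i)%:R * h).
Definition inCell (j : {ffun 'I_d -> 'I_Kc}) (x : 'rV[R]_d) : bool :=
  [forall i, (corner j 0 i <= x 0 i) && (x 0 i < corner j 0 i + h)].

Lemma inCell_uniq j j' x : 0 < h -> inCell j x -> inCell j' x -> j = j'.
Proof.
move=> h0 /forallP H /forallP H'; apply/ffunP => i; apply: val_inj => /=.
move: (H i) (H' i); rewrite /corner !mxE => /andP[a1 a2] /andP[b1 b2].
have l1 : ((j i)%:R * h < (j' i)%:R * h + h).
  by have := le_lt_trans a1 b2; rewrite -addrA ltrD2l.
have l2 : ((j' i)%:R * h < (j i)%:R * h + h).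
  by have := le_lt_trans b1 a2; rewrite -addrA ltrD2l.
have nS : forall m : nat, m%:R * h + h = (m.+1)%:R * h.
  by move=> m; rewrite -addn1 natrD mulrDl mul1r.
move: l1 l2; rewrite !nS.
rewrite !ltr_pM2r // !ltr_nat !ltnS => l1 l2.
by apply/eqP; rewrite eqn_leq l1 l2.
Qed.

End Cells.

Lemma inCell_ex L h (x : 'rV[R]_d) : 0 < h -> (forall i, `|x 0 i| <= L) ->
  exists j : {ffun 'I_d -> 'I_(Num.trunc (2 * L / h)).+1}, inCell L h j x.
Proof.
move=> h0 hx.
exists [ffun i => inord (Num.trunc ((x 0 i + L) / h))].
apply/forallP => i; rewrite /corner !mxE ffunE.
have y0 : 0 <= (x 0 i + L) / h.
  apply: divr_ge0; last exact: ltW.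
  by rewrite -lerBlDr sub0r; move: (hx i); rewrite ler_norml => /andP[].
rewrite inordK; last first.
  rewrite ltnS; apply: le_truncn; rewrite ler_pM2r ?invr_gt0 //.
  by move: (hx i); rewrite ler_norml => /andP[_ H]; lra.
apply/andP; split.
  have := truncn_le ((x 0 i + L) / h); rewrite y0 ler_pdivlMr // => H.
  by lra.
have := truncnS_gt ((x 0 i + L) / h); rewrite ltr_pdivrMr //.
rewrite -natr1 mulrDl mul1r => H; lra.
Qed.

Definition L2 n : seq (nat * seq 'I_d) := [seq (k, w) | k <- iota 0 n, w <- Wl k].

Lemma construct a n B L h : smooth a -> 0 < h -> 0 <= B ->
  (forall w, w \in Wl n -> forall p, `|Defs.iterD (map (@xdir R d) w) a p| <= B) ->
  (forall x xi, a (x, xi) != 0 -> forall i, `|x 0 i| <= L) ->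
  sep_approx a ((size (Wl n))%:R * (h ^+ n * B))
    ((Num.trunc (2 * L / h)).+1 ^ d * size (L2 n))%N.
Proof.
move=> sa h0 B0 hB hsupp.
set Kc := (Num.trunc (2 * L / h)).+1.
pose J := {ffun 'I_d -> 'I_Kc}.
pose T := (J * (nat * seq 'I_d))%type.
pose Lall : seq T := [seq (j, kw) | j <- enum J, kw <- L2 n].
pose t0 : T := ([ffun => ord0], (0%N, [::])).
pose cf := fun (t : T) (x : 'rV[R]_d) => (inCell L h t.1 x)%:R *
   ((\prod_(i <- t.2.2) (x - corner L h t.1) 0 i) / (t.2.1)`!%:R).
pose ef := fun (t : T) (xi : 'rV[R]_d) =>
   Defs.iterD (map (@xdir R d) t.2.2) a (corner L h t.1, xi).
exists (fun m => cf (nth t0 Lall m)), (fun m => ef (nth t0 Lall m)).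
move=> x xi.
have sz : size Lall = (Kc ^ d * size (L2 n))%N.
  by rewrite size_allpairs -cardE card_ffun !card_ord.
rewrite -sz.
have -> : \sum_(m < size Lall) cf (nth t0 Lall m) x * ef (nth t0 Lall m) xi =
    \sum_(t <- Lall) cf t x * ef t xi by rewrite (big_nth t0) big_mkord.
rewrite big_allpairs /=.
have inner : forall j : J, \sum_(kw <- L2 n) cf (j, kw) x * ef (j, kw) xi =
   (inCell L h j x)%:R * \sum_(k < n) \sum_(w <- Wl k)
      ((\prod_(i <- w) (x - corner L h j) 0 i) / k`!%:R) *
        Defs.iterD (map (@xdir R d) w) a (corner L h j, xi).
  move=> j; rewrite /L2 big_allpairs_dep big_distrr /=.
  have -> : iota 0 n = index_iota 0 n by rewrite /index_iota subn0.
  rewrite big_mkord; apply: eq_bigr => k _.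
  rewrite big_distrr; apply: eq_bigr => w _ /=.
  by rewrite mulrA.
under eq_bigr => j _ do rewrite inner.
case: (pselect (exists j : J, inCell L h j x)) => [[j0 Hj0]|Hno].
  rewrite (bigD1_seq (r := enum J) j0) ?mem_enum ?enum_uniq //= [X in _ - (_ + X)]big1 ?addr0; last first.
    move=> j jn.
    case E: (inCell L h j x); last by rewrite mul0r.
    by rewrite (inCell_uniq h0 E Hj0) eqxx in jn.
  rewrite Hj0 mul1r; apply: taylor_point => // i.
  move/forallP: Hj0 => /(_ i) /andP[c1 c2].
  rewrite !mxE ger0_norm ?subr_ge0 //; last by rewrite /corner mxE in c1. rewrite /corner mxE in c2; lra.
have a0 : a (x, xi) = 0.
  apply/eqP; apply: contraT => /hsupp H.
  have [j Hj] := inCell_ex h0 H.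
  by exfalso; apply: Hno; exists j.
rewrite a0 big1_seq ?subr0 ?normr0.
  by apply: mulr_ge0 => //; apply: mulr_ge0 => //; apply: exprn_ge0; apply: ltW.
move=> j _.
case E: (inCell L h j x); last by rewrite mul0r.
by exfalso; apply: Hno; exists j.
Qed.

End Expand.

Section Main.
Variables (R : realType) (d : nat).

Lemma bound_list (a : phase R d -> R) : symbol0_10 a ->
  forall l : seq (seq 'I_d), exists2 B : R, 0 <= B &
   forall w, w \in l -> forall p, `|Defs.iterD (map (@xdir R d) w) a p| <= B.
Proof.
case=> _ hs; elim=> [|w l [B B0 HB]]; first by exists 0 => //.
have [C C0 HC] := hs [::] w.
exists (B + C); first by rewrite addr_ge0 // ltW.
move=> w'; rewrite inE => /orP[/eqP -> | wl] [x xi].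
  apply: le_trans (HC x xi) _; rewrite /= mul0r oppr0 powRr0 mulr1.
  by rewrite lerDr.
by apply: le_trans (HB _ wl (x, xi)) _; rewrite lerDl ltW.
Qed.

Lemma sep_mono (f : phase R d -> R) e1 e2 r : e1 <= e2 ->
  sep_approx f e1 r -> sep_approx f e2 r.
Proof.
move=> le [c [e H]]; exists c, e => x xi; exact: le_trans (H x xi) le.
Qed.

Lemma min_rank (f : phase R d -> R) eps r0 : sep_approx f eps r0 ->
  exists r, is_sep_rank f eps r /\ (r <= r0)%N.
Proof.
move=> H.
have ex : exists r, `[< sep_approx f eps r >] by exists r0; apply/asboolP.
case: (ex_minnP ex) => r /asboolP Hr Hmin.
exists r; split; last by apply: Hmin; apply/asboolP.
split => // r' Hr'; apply: Hmin; exact/asboolP.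
Qed.

Lemma box (K : set 'rV[R]_d) : compact K ->
  exists2 L : R, 0 <= L & forall x, K x -> forall i, `|x 0 i| <= L.
Proof.
move=> /compact_bounded [M0 [_ HM]].
exists (`|M0| + 1); first by rewrite addr_ge0.
move=> x Kx i.
have Hx : `|x| <= `|M0| + 1.
  apply: (HM (`|M0| + 1)) => //.
  by apply: le_lt_trans (ler_norm _) _; rewrite ltrDl.
apply: le_trans Hx.
have -> : `|x| = mx_norm x by [].
by rewrite mx_normrE (le_bigmax _ _ (0, i)).
Qed.

End Main.

Unset Implicit Arguments.

Theorem lemma2 (R : realType) (d : nat) (a : phase R d -> R) :
  symbol0_10 a -> compact_support_x a ->
  forall M : R, 0 < M ->
  exists2 C : R, 0 < C &
    forall eps : R, 0 < eps ->
      exists r : nat, is_sep_rank a eps r /\ r%:R <= C * eps `^ (- M^-1).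
Proof.
move=> sym [K [cK hK]] M M0.
have sa := sym.1.
set n := (Num.trunc (d%:R * M)).+1.
have hn : d%:R * M < n%:R := truncnS_gt _.
have n0 : 0 < n%:R :> R by rewrite ltr0n.
have [Bn Bn0 HBn] := bound_list sym (Wl d n).
have [B0 B00 HB0] := bound_list sym [:: [::]].
have Ha : forall x xi, `|a (x, xi)| <= B0.
  by move=> x xi; apply: (HB0 [::] (mem_head _ _) (x, xi)).
have [L L0 HL] := box cK.
have hsupp : forall x xi, a (x, xi) != 0 -> forall i, `|x 0 i| <= L.
  move=> x xi /eqP H; apply: HL.
  by case: (pselect (K x)) => // nK; exfalso; apply: H; exact: hK.
set Nn := size (Wl d n); set S := size (L2 d n).
set A := 1 + B0 + Nn%:R * Bn.
have NB0 : 0 <= Nn%:R * Bn by apply: mulr_ge0.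
have A1 : 1 <= A by rewrite /A; lra.
have A0 : 0 < A by lra.
have L1 : 0 <= 2 * L + 1 by lra.
exists (S%:R * (2 * L + 1) ^+ d * A `^ M^-1 + 1).
  apply: ltr_pwDr => //; apply: mulr_ge0; last exact: powR_ge0.
  by apply: mulr_ge0 => //; apply: exprn_ge0.
move=> eps eps0.
have pe0 : 0 <= eps `^ (- M^-1) by apply: powR_ge0.
case: (leP A eps) => [Ae | eA].
  have sa0 : sep_approx a eps 0.
    exists (fun _ _ => 0), (fun _ _ => 0) => x xi.
    rewrite big_ord0 subr0; apply: le_trans (Ha x xi) _; have : B0 <= A by rewrite /A; lra.
    lra.
  have [r [Hr rle]] := min_rank sa0; exists r; split => //.
  move: rle; rewrite leqn0 => /eqP ->.
  apply: mulr_ge0 => //; apply: addr_ge0 => //.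
  apply: mulr_ge0; last exact: powR_ge0.
  by apply: mulr_ge0 => //; apply: exprn_ge0.
set q := A / eps.
have q1 : 1 < q by rewrite /q ltr_pdivlMr // mul1r.
have q0 : 0 < q by lra.
set h := q `^ (- n%:R^-1).
have h0 : 0 < h by apply: powR_gt0.
have hinv : h^-1 = q `^ (n%:R^-1) by rewrite /h powRN invrK.
have hn_eq : h ^+ n = eps / A.
  rewrite -[h]invrK hinv exprVn -powR_mulrn ?powR_ge0 // -powRrM.
  by rewrite mulVf ?gt_eqF // powRr1 ?(ltW q0) // /q invf_div.
have hi1 : 1 <= h^-1.
  rewrite hinv; apply: le_trans (_ : q `^ 0 <= _); first by rewrite powRr0.
  apply: ler_powR; first exact: ltW.
  by rewrite invr_ge0 ltW.
have h1 : h <= 1.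
  have : h * 1 <= h * h^-1 by rewrite ler_pM2l.
  by rewrite mulr1 mulfV ?gt_eqF.
have Hc := construct sa h0 Bn0 HBn hsupp.
have Hc' : sep_approx a eps ((Num.trunc (2 * L / h)).+1 ^ d * S)%N.
  apply: sep_mono Hc; rewrite hn_eq.
  have -> : Nn%:R * (eps / A * Bn) = eps * ((Nn%:R * Bn) / A) by field; lra.
  rewrite ler_piMr ?ltW //. rewrite ltr_pdivrMr // mul1r /A; lra.
have [r [Hr rle]] := min_rank Hc'; exists r; split => //.
set Kc := (Num.trunc (2 * L / h)).+1 in Hc' rle.
have Kc_le : Kc%:R <= (2 * L + 1) * h^-1.
  rewrite /Kc -natr1.
  have := truncn_le (2 * L / h); rewrite divr_ge0 ?(ltW h0) ?mulr_ge0 // => H.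
  rewrite [(2 * L + 1) * _]mulrDl mul1r; apply: lerD => //.
have KcX : Kc%:R ^+ d <= (2 * L + 1) ^+ d * q `^ M^-1.
  have X1 : Kc%:R ^+ d <= ((2 * L + 1) * h^-1) ^+ d.
    apply: lerXn2r => //; rewrite nnegrE ?ler0n // mulr_ge0 // invr_ge0 ltW //.
  apply: le_trans X1 _.
  rewrite exprMn ler_pM2l; last by rewrite exprn_gt0 //; lra.
  rewrite hinv -powR_mulrn ?powR_ge0 // -powRrM; apply: ler_powR; first exact: ltW.
  rewrite mulrC ler_pdivrMr // mulrC ler_pdivlMr //.
  exact: ltW.
have eM : q `^ M^-1 = A `^ M^-1 * eps `^ (- M^-1).
  rewrite /q (powRM _ (ltW A0)); last by rewrite invr_ge0 ltW.
  congr (_ * _).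
  rewrite powRN; apply: (@mulfI _ (eps `^ M^-1)); first by rewrite gt_eqF // powR_gt0.
  rewrite -(powRM _ (ltW eps0)); last by rewrite invr_ge0 ltW.
  rewrite mulfV ?gt_eqF // powR1 /= mulfV // gt_eqF // powR_gt0 //.
apply: le_trans (_ : (Kc ^ d * S)%:R <= _).
  by rewrite ler_nat.
rewrite natrM natrX mulrDl mul1r; apply: ler_wpDr => //.
rewrite mulrC -!mulrA; apply: ler_wpM2l; first exact: ler0n.
by rewrite -eM.
Qed.
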